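(* Let $m\ge 3$, let $M$ be a set of $m$ parties and $p\ge 0$ an integer, and let $|\Psi\rangle=|\Psi_m^+\rangle^{\otimes p}$, where each party holds one qubit of each copy. Then $\max_{\rho\in\Gamma(\Psi)}S(\rho)=p$, where $\Gamma(\Psi)$ is the set of density operators $\rho$ on the $mp$ qubits with $\mathrm{Tr}_\alpha\rho=\mathrm{Tr}_\alpha|\Psi\rangle\langle\Psi|$ for every party $\alpha\in M$, and $S(\rho)=-\mathrm{Tr}\,\rho\log_2\rho$.
   Context: $|\Psi_m^+\rangle=\frac{1}{\sqrt2}(|0\rangle^{\otimes m}+|1\rangle^{\otimes m})$ is the $m$-qubit GHZ state. $\mathrm{Tr}_\alpha$ denotes the partial trace over all qubits held by party $\alpha$ (here, $p$ qubits). *)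

(* Defs.v *)
From HB Require Import structures.
From mathcomp Require Import all_boot all_order all_algebra.
From mathcomp Require Import spectral.
From mathcomp.real_closed Require Import complex.
From mathcomp Require Import reals exp.

Set Implicit Arguments.
Unset Strict Implicit.
Unset Printing Implicit Defensive.

Import Order.TTheory GRing.Theory Num.Theory.
Local Open Scope ring_scope.

(* A computational basis state of the m*p qubits: party a holds the p qubits
   x a j (j-th qubit = its qubit of the j-th GHZ copy). *)
Definition config (m p : nat) := {ffun 'I_m -> {ffun 'I_p -> bool}}.

(* Hilbert space dimension 2^(m p) = #|config m p|; operators are square
   matrices indexed through enum_rank. *)
Definition qdim (m p : nat) := #|config m p|.

Definition entry (R : realType) (m p : nat) (A : 'M[R[i]]_(qdim m p))
  (x y : config m p) : R[i] := A (enum_rank x) (enum_rank y).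

Definition is_density (R : realType) (n : nat) (rho : 'M[R[i]]_n) : Prop :=
  [/\ map_mx Num.conj (rho^T) = rho,
      (forall v : 'rV[R[i]]_n, 0 <= (v *m rho *m (map_mx Num.conj v^T)) 0 0)
    & \tr rho = 1].

Definition setparty (m p : nat) (x : config m p) (a : 'I_m)
  (z : {ffun 'I_p -> bool}) : config m p :=
  [ffun b => if b == a then z else x b].

(* matrix entries of the partial trace Tr_a A over the p qubits of party a,
   between the basis states of the remaining qubits given by x and y
   (party a's part of x, y is ignored). *)
Definition ptrace_party (R : realType) (m p : nat) (a : 'I_m)
  (A : 'M[R[i]]_(qdim m p)) (x y : config m p) : R[i] :=
  \sum_(z : {ffun 'I_p -> bool}) entry A (setparty x a z) (setparty y a z).

(* amplitude of |Psi_m^+>^{(x) p}: for each copy j, the qubits of all parties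
   must agree; amplitude (1/sqrt 2)^p on such basis states *)
Definition ghz_amp (R : realType) (m p : nat) (x : config m p) : R[i] :=
  if [forall j : 'I_p, forall a : 'I_m, forall b : 'I_m, x a j == x b j]
  then ((Num.sqrt (2 : R))^-1 ^+ p)%:C%C else 0.

Definition ghz_proj (R : realType) (m p : nat) : 'M[R[i]]_(qdim m p) :=
  \matrix_(i < qdim m p, j < qdim m p)
    (@ghz_amp R m p (enum_val i) * Num.conj (@ghz_amp R m p (enum_val j))).

Definition Gamma (R : realType) (m p : nat) (rho : 'M[R[i]]_(qdim m p)) : Prop :=
  is_density rho /\
  forall (a : 'I_m) (x y : config m p),
    ptrace_party a rho x y = ptrace_party a (ghz_proj R m p) x y.

(* t log2 t with the convention 0 log 0 = 0 *)
Definition xlog2 (R : realType) (t : R) : R :=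
  if t == 0 then 0 else t * ln t / ln 2.

(* von Neumann entropy S(rho) = - Tr rho log2 rho = - sum_i l_i log2 l_i,
   where the l_i are the eigenvalues (with multiplicity) of the Hermitian rho,
   given by the spectral decomposition rho = U^-1 diag(l) U of spectral.v *)
Definition vn_entropy (R : realType) (n : nat) (rho : 'M[R[i]]_n) : R :=
  - \sum_(k < n) xlog2 (complex.Re (spectral_diag rho 0 k)).

(* Main.v *)
Require Import Defs.
From HB Require Import structures.
From mathcomp Require Import all_boot all_order all_algebra.
From mathcomp Require Import spectral.
From mathcomp.real_closed Require Import complex.
From mathcomp Require Import reals exp.
From mathcomp Require Import sesquilinear.
From mathcomp Require Import ring lra zify.
Import Order.TTheory GRing.Theory Num.Theory.
Local Open Scope ring_scope.

Lemma ln_le_sub1 (R : realType) (x : R) : 0 < x -> ln x <= x - 1.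
Proof.
move=> x0; have := @le_ln1Dx R (x - 1).
rewrite [1 + _]addrC subrK; apply; rewrite ltrBrDr; by rewrite addNr.
Qed.

Lemma entropy_bound (R : realType) n (l : 'I_n -> R) (N : nat) :
  (forall k, 0 <= l k) -> \sum_k l k = 1 ->
  (#|[pred k | l k != 0%R]| <= 2 ^ N)%N ->
  - \sum_k xlog2 (l k) <= N%:R.
Proof.
move=> l0 l1 hK.
set K := #|[pred k | l k != 0%R]|.
have K0 : (0 < K)%N.
  rewrite lt0n; apply/negP => /eqP /card0_eq HK.
  have : \sum_k l k = 0.
    apply: big1 => k _; move: (HK k); rewrite !inE.
    by move/negbFE/eqP.
  by rewrite l1 => /eqP; rewrite oner_eq0.
set c : R := K%:R.
have c0 : 0 < c by rewrite ltr0n.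
have ln2 : 0 < ln (2 : R) by apply: ln_gt0; rewrite ltr1n.
have step : forall k, - xlog2 (l k) * ln 2 <=
    l k * ln c + (if l k == 0 then 0 else c^-1) - l k.
  move=> k; rewrite /xlog2; case: eqP => [->|/eqP lk0].
    by rewrite oppr0 mul0r mul0r add0r addr0.
  have lk : 0 < l k by rewrite lt_neqAle eq_sym lk0 l0.
  rewrite mulNr divfK ?gt_eqF //.
  have h := @ln_le_sub1 R _ (divr_gt0 (@ltr01 R) (mulr_gt0 c0 lk)).
  rewrite div1r lnV ?posrE ?mulr_gt0 // lnM ?posrE // in h.
  have h2 := ler_wpM2l (ltW lk) h.
  have e : l k * (c * l k)^-1 = c^-1 by rewrite invfM mulrCA mulfV ?gt_eqF // mulr1.
  rewrite mulrBr e mulr1 in h2.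
  lra.
have : (- \sum_k xlog2 (l k)) * ln 2 <= ln c.
  rewrite -sumrN mulr_suml.
  apply: le_trans (ler_sum _ (fun k _ => step k)) _.
  rewrite sumrB big_split /= -mulr_suml l1 mul1r.
  rewrite (eq_bigr (fun i => if l i != 0 then c^-1 else 0)); last first.
    by move=> i _; case: eqP.
  rewrite -big_mkcond /= sumr_const.
  have -> : #|[pred i | l i != 0]| = K by [].
  rewrite -[_ *+ K]mulr_natl mulfV ?gt_eqF //.
  by rewrite addrK.
move=> h; rewrite -(ler_pM2r ln2); apply: (le_trans h).
rewrite mulr_natl -lnXn; last by rewrite ltr0n.
rewrite ler_ln ?posrE ?exprn_gt0 ?ltr0n //.
by rewrite -natrX ler_nat.
Qed.

Set Implicit Arguments.
Unset Strict Implicit.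
Unset Printing Implicit Defensive.

Section Gen.
Variable C : numClosedFieldType.

Definition herm n (A : 'M[C]_n) := map_mx Num.conj A^T = A.
Definition psd n (A : 'M[C]_n) :=
  forall v : 'rV[C]_n, 0 <= (v *m A *m (map_mx Num.conj v^T)) 0 0.

Lemma herm_spec n (rho : 'M[C]_n) : herm rho ->
  diag_mx (spectral_diag rho) =
  spectralmx rho *m rho *m (map_mx Num.conj (spectralmx rho)^T).
Proof.
move=> H.
have Nrm : rho \is normalmx by apply/normalmxP; rewrite /herm in H; rewrite H.
have E := orthomx_spectralP Nrm.
have Uu := spectral_unit rho.
rewrite -invmx_unitary ?spectral_unitarymx //.
move: E Uu; set U := spectralmx rho; set D := diag_mx _ => E Uu.
by rewrite [in RHS]E !mulmxA mulmxV // mul1mx mulmxK.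
Qed.

Arguments herm_spec {n rho}.

Lemma qform_kk n (A B : 'M[C]_n) k :
  (A *m B *m map_mx Num.conj A^T) k k =
  (row k A *m B *m map_mx Num.conj (row k A)^T) 0 0.
Proof.
rewrite !mxE; apply: eq_bigr => j _; rewrite !mxE; congr (_ * _).
by apply: eq_bigr => l _; rewrite !mxE.
Qed.

Lemma spec_ge0 n (rho : 'M[C]_n) k : herm rho -> psd rho ->
  0 <= spectral_diag rho 0 k.
Proof.
move=> H P; have := congr1 (fun M : 'M[C]_n => M k k) (herm_spec H).
by rewrite /= mxE eqxx mulr1n qform_kk => ->.
Qed.

Lemma spec_sum n (rho : 'M[C]_n) : herm rho ->
  \sum_k spectral_diag rho 0 k = \tr rho.
Proof.
move=> H; rewrite -mxtrace_diag herm_spec //.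
rewrite -invmx_unitary ?spectral_unitarymx //.
by rewrite mxtrace_mulC mulmxA mulVmx ?spectral_unit // mul1mx.
Qed.

Lemma rank_diag_ge n (d : 'rV[C]_n) :
  (#|[pred k | d ord0 k != 0%R]| <= \rank (diag_mx d))%N.
Proof.
set K := [pred k | d ord0 k != 0%R].
pose M : 'M[C]_(#|K|, n) := \matrix_(i, j) (j == enum_val i)%:R.
pose N : 'M[C]_(n, #|K|) := \matrix_(j, i) ((j == enum_val i)%:R / d ord0 j).
apply: (@mulmx1_min_rank _ _ _ _ _ M N).
apply/matrixP => i i'; rewrite /M /N !mxE.
rewrite (bigD1 (enum_val i')) //= big1 ?addr0; last first.
  by move=> j /negbTE hj; rewrite !mxE hj mulr0n mul0r mulr0.
rewrite !mxE eqxx mulr1n mul1r.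
rewrite (bigD1 (enum_val i)) //= big1 ?addr0; last first.
  by move=> j /negbTE hj; rewrite !mxE hj mulr0n mul0r.
rewrite !mxE !(inj_eq enum_val_inj) eqxx mul1r.
have := enum_valP i'; rewrite inE => hd.
case: eqP => [->|_]; first by rewrite mulr1n mulfV.
by rewrite mulr0n mul0r.
Qed.

Lemma spec_rank n (rho : 'M[C]_n) : herm rho ->
  (#|[pred k | spectral_diag rho ord0 k != 0%R]| <= \rank rho)%N.
Proof.
move=> H; apply: leq_trans (rank_diag_ge _) _.
by rewrite herm_spec // (leq_trans (mxrankM_maxl _ _)) // mxrankM_maxr.
Qed.

End Gen.

Section Gen2.
Variable C : numClosedFieldType.

Lemma eAe n (A : 'M[C]_n) i j :
  ((delta_mx 0 i : 'rV[C]_n) *m A *m map_mx Num.conj (delta_mx 0 j : 'rV[C]_n)^T) 0 0 = A i j.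
Proof.
rewrite -rowE !mxE (bigD1 j) //= big1 ?addr0.
  by rewrite !mxE !eqxx mulr1n conjC1 mulr1.
by move=> l /negbTE hl; rewrite !mxE eqxx hl mulr0n conjC0 mulr0.
Qed.

Lemma e00D (X Y : 'M[C]_1) : (X + Y) 0 0 = X 0 0 + Y 0 0.
Proof. by rewrite mxE. Qed.
Lemma e00Z (t : C) (X : 'M[C]_1) : (t *: X) 0 0 = t * X 0 0.
Proof. by rewrite mxE. Qed.

Lemma psd_diag n (A : 'M[C]_n) i : psd A -> 0 <= A i i.
Proof. by move=> P; have := P (delta_mx 0 i); rewrite (eAe A i i). Qed.

Lemma psd_off n (A : 'M[C]_n) i j : herm A -> psd A -> A i i = 0 -> A i j = 0.
Proof.
move=> H P Aii.
have Aji : A j i = (A i j)^* by rewrite -{1}H !mxE.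
set a := A i j in Aji *.
have qf : forall t : C, 0 <= t * a + t^* * a^* + A j j.
  move=> t; have := P (t *: delta_mx 0 i + delta_mx 0 j).
  rewrite linearD /= map_mxD linearZ /= map_mxZ.
  rewrite !mulmxDl !mulmxDr -!scalemxAl -!scalemxAr.
  rewrite !e00D !e00Z !eAe Aii Aji.
  by rewrite mulr0 mulr0 add0r addrA.
have w0 : 0 <= a * a^* := mul_conjC_ge0 a.
case: (eqVneq a 0) => [//|anz].
have wnz : a * a^* != 0 by rewrite mulf_neq0 // conjC_eq0.
have Ajj : 0 <= A j j := psd_diag j P.
set s := (A j j + 1) / (2 * (a * a^*)).
have sr : s^* = s.
  rewrite /s rmorphM /= fmorphV /= rmorphM /= rmorphD /= rmorph1 /= rmorph_nat.
  rewrite (conj_Creal (ger0_real Ajj)) (conj_Creal (ger0_real w0)) //.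
have := qf (- s * a^*).
rewrite rmorphM /= rmorphN /= conjCK sr.
have -> : - s * a^* * a + - s * a * a^* + A j j = -1.
  by rewrite /s; field; rewrite conjC_eq0 anz.
move=> h; have := le_lt_trans h (@ltrN10 C).
by rewrite ltxx.
Qed.

End Gen2.

Section P.
Variable R : realType.
Variables m p : nat.
Hypothesis hm : (3 <= m)%N.
Local Notation C := (R[i]).
Local Notation cfg := (config m p).
Local Notation n := (qdim m p).

Definition ghzb (x : cfg) : bool := [forall j, forall a, forall b, x a j == x b j].

Lemma ghzP (x : cfg) : reflect (forall j a b, x a j = x b j) (ghzb x).
Proof.
apply: (iffP forallP) => [h j a b|h j].
  by have /forallP/(_ a)/forallP/(_ b)/eqP := h j.
by apply/forallP => a; apply/forallP => b; apply/eqP; apply: h.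
Qed.

Lemma entry_ghz (x y : cfg) :
  entry (ghz_proj R m p) x y = ghz_amp R x * Num.conj (ghz_amp R y).
Proof. by rewrite /entry /ghz_proj mxE !enum_rankK. Qed.

Lemma ghz_amp0 (x : cfg) : ~~ ghzb x -> ghz_amp R x = 0.
Proof. by rewrite /ghz_amp /ghzb => /negbTE ->. Qed.

Lemma third (a b : 'I_m) : exists c : 'I_m, (c != a) && (c != b).
Proof.
have : (0 < #|~: [set a; b]|)%N.
  have := cardsC [set a; b]; rewrite card_ord.
  have : (#|[set a; b]| <= 2)%N by rewrite cards2; case: (a != b).
  move: hm; lia.
by case/card_gt0P => c; rewrite !inE negb_or => hc; exists c.
Qed.

Lemma not_ghz (x : cfg) : ~~ ghzb x -> exists j a b, x a j != x b j.
Proof.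
rewrite /ghzb negb_forall => /existsP [j]; rewrite negb_forall => /existsP [a].
by rewrite negb_forall => /existsP [b] h; exists j, a, b.
Qed.


Lemma setpartyE (x : cfg) a z b : setparty x a z b = if b == a then z else x b.
Proof. by rewrite ffunE. Qed.

Lemma setparty_id (x : cfg) a : setparty x a (x a) = x.
Proof. by apply/ffunP => b; rewrite setpartyE; case: eqP => [->|]. Qed.

Lemma supp_diag (rho : 'M[C]_n) (x : cfg) :
  Gamma rho -> ~~ ghzb x -> entry rho x x = 0.
Proof.
case=> [[H P T] Hm] nx.
have [j [a [b hab]]] := not_ghz nx.
have [c /andP [ca cb]] := third a b.
have := Hm c x x; rewrite /ptrace_party.
rewrite [RHS]big1; last first.
  move=> z _; rewrite entry_ghz ghz_amp0 ?mul0r //.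
  apply/ghzP => /(_ j a b); rewrite !setpartyE eq_sym (negbTE ca).
  by rewrite eq_sym (negbTE cb); apply/eqP.
move/psumr_eq0P => h.
have := h _ (x c) isT; rewrite setparty_id; apply.
by move=> z _; rewrite /entry; apply: psd_diag.
Qed.

Lemma supp_row (rho : 'M[C]_n) (x y : cfg) :
  Gamma rho -> ~~ ghzb x -> entry rho x y = 0.
Proof.
move=> G nx; have := supp_diag G nx; rewrite /entry => hx.
by case: G => [[H P T] _]; apply: psd_off.
Qed.

Lemma supp_col (rho : 'M[C]_n) (x y : cfg) :
  Gamma rho -> ~~ ghzb y -> entry rho x y = 0.
Proof.
move=> G ny; have := supp_row x G ny; rewrite /entry => h.
case: G => [[H _ _] _]; rewrite -H !mxE h.
by rewrite conjC0.
Qed.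

Definition cst (z : {ffun 'I_p -> bool}) : cfg := [ffun _ => z].

Lemma cst_ghz z : ghzb (cst z).
Proof. by apply/ghzP => j a b; rewrite !ffunE. Qed.

Lemma a0 : 'I_m.
Proof. exact: (Ordinal (leq_trans (isT : (1 <= 3)%N) hm)). Qed.

Lemma ghz_cst (x : cfg) : ghzb x -> x = cst (x a0).
Proof.
move/ghzP=> h; apply/ffunP => b; rewrite ffunE; apply/ffunP => j.
exact: h.
Qed.

Lemma cst_inj : injective cst.
Proof. by move=> z1 z2 /(congr1 (fun x : cfg => x a0)); rewrite !ffunE. Qed.

Lemma card_T : #|{ffun 'I_p -> bool}| = (2 ^ p)%N.
Proof. by rewrite card_ffun card_bool card_ord. Qed.

Lemma rank_le (rho : 'M[C]_n) : Gamma rho -> (\rank rho <= 2 ^ p)%N.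
Proof.
move=> G.
pose T := {ffun 'I_p -> bool}.
pose A : 'M[C]_(n, #|T|) :=
  \matrix_(i, t) rho i (enum_rank (cst (enum_val t))).
pose B : 'M[C]_(#|T|, n) :=
  \matrix_(t, j) ((enum_val (j : 'I_#|cfg|) == cst (enum_val t))%:R).
have -> : rho = A *m B.
  apply/matrixP => i j; rewrite mxE.
  case: (boolP (ghzb (enum_val (j : 'I_#|cfg|)))) => gj.
    pose z := (enum_val (j : 'I_#|cfg|) : cfg) a0.
    have ej : enum_val (j : 'I_#|cfg|) = cst z := ghz_cst gj.
    rewrite (bigD1 (enum_rank z)) //= big1 ?addr0.
      rewrite /A /B !mxE enum_rankK -ej eqxx mulr1.
      by rewrite enum_valK.
    move=> t tz; rewrite /A /B !mxE ej (inj_eq cst_inj).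
    rewrite (_ : (z == enum_val t) = false) ?mulr0 //.
    apply/negbTE; apply: contra tz => /eqP ->.
    by rewrite enum_valK.
  rewrite big1.
    have := supp_col (enum_val (i : 'I_#|cfg|)) G gj.
    by rewrite /entry !enum_valK.
  move=> t _; rewrite /A /B !mxE.
  case: eqP => [e|_]; last by rewrite mulr0.
  by move: gj; rewrite e cst_ghz.
by rewrite -card_T mulmx_max_rank.
Qed.

Lemma ReD (x y : C) : complex.Re (x + y) = complex.Re x + complex.Re y.
Proof. by case: x; case: y. Qed.

Lemma upper (rho : 'M[C]_n) : Gamma rho -> vn_entropy rho <= p%:R.
Proof.
move=> G; have [[H P T] _] := G.
rewrite /vn_entropy; apply: entropy_bound.
- move=> k; have := spec_ge0 k H P; rewrite lecE => /andP [_].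
  by [].
- rewrite -(big_morph _ ReD (erefl (complex.Re (0 : C)))).
  by rewrite spec_sum // T.
- apply: leq_trans (rank_le G).
  apply: leq_trans (spec_rank H).
  apply: subset_leq_card; apply/subsetP => k; rewrite !inE.
  by apply: contra => /eqP ->.
Qed.

End P.

Local Open Scope complex_scope.
Local Open Scope ring_scope.

Section E.
Variable R : realType.
Variables m p : nat.
Hypothesis hm : (3 <= m)%N.
Local Notation C := (R[i]).
Local Notation cfg := (config m p).
Local Notation n := (qdim m p).

Definition cR : R := ((2 ^ p)%:R)^-1.
Definition cC : C := (cR)%:C.

Lemma amp_sq : (Num.sqrt (2:R))^-1 ^+ p * (Num.sqrt (2:R))^-1 ^+ p = cR.
Proof.
rewrite -exprMn -invfM -expr2 sqr_sqrtr ?ler0n // exprVn /cR natrX.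
by [].
Qed.

Lemma cC_conj : Num.conj cC = cC.
Proof. exact: conjc_real. Qed.

Lemma cR_gt0 : 0 < cR.
Proof. by rewrite /cR invr_gt0 ltr0n expn_gt0. Qed.

Definition w : 'rV[C]_n := \row_j (if ghzb (enum_val (j : 'I_#|cfg|)) then cC else 0).
Definition rho0 : 'M[C]_n := diag_mx w.

Lemma entry_rho0 (x y : cfg) :
  entry rho0 x y = (if ghzb x then cC else 0) *+ (x == y).
Proof.
by rewrite /entry /rho0 /w !mxE enum_rankK (inj_eq enum_rank_inj).
Qed.

Lemma sum_cfg (f : cfg -> C) :
  \sum_(j < n) f (enum_val (j : 'I_#|cfg|)) = \sum_(x : cfg) f x.
Proof.
rewrite (reindex (@enum_rank cfg)) /=; last first.
  by apply: onW_bij; apply: enum_rank_bij.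
by apply: eq_bigr => x _; rewrite enum_rankK.
Qed.

Lemma sum_ghz (F : cfg -> C) :
  \sum_(x : cfg | ghzb x) F x = \sum_(z : {ffun 'I_p -> bool}) F (cst m z).
Proof.
rewrite (reindex_onto (@cst m p) (fun x : cfg => x (a0 hm))) /=; last first.
  by move=> x gx; rewrite -ghz_cst.
apply: eq_bigl => z; rewrite cst_ghz /= ffunE eqxx.
by [].
Qed.

Lemma Gamma_rho0 : Gamma rho0.
Proof.
split; first split.
- rewrite /rho0 tr_diag_mx map_diag_mx; congr diag_mx.
  apply/rowP => j; rewrite !mxE; case: ifP => _; first exact: cC_conj.
  exact: conjC0.
- move=> v; rewrite /rho0 mul_mx_diag mxE sumr_ge0 // => j _; rewrite !mxE.
  case: ifP => _; last by rewrite mulr0 mul0r.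
  rewrite mulrAC mulr_ge0 ?mul_conjC_ge0 //.
  by rewrite /cC ler0c ltW // cR_gt0.
- rewrite /rho0 mxtrace_diag.
  rewrite (eq_bigr (fun j => (fun x => if ghzb x then cC else 0)
      (enum_val (j : 'I_#|cfg|)))); last by move=> j _; rewrite mxE.
  rewrite (sum_cfg (fun x => if ghzb x then cC else 0)) -big_mkcond /= sum_ghz sumr_const card_T.
  rewrite /cC /cR -rmorphMn /= -mulr_natl mulfV ?pnatr_eq0 ?expn_eq0 //.
move=> a x y; rewrite /ptrace_party; apply: eq_bigr => z _.
rewrite entry_rho0 entry_ghz /ghz_amp.
set u := setparty x a z; set v := setparty y a z.
rewrite -/(ghzb u) -/(ghzb v).
case: (boolP (ghzb u)) => gu; case: (boolP (ghzb v)) => gv.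
- have -> : u == v.
    apply/eqP; rewrite (ghz_cst hm gu) (ghz_cst hm gv).
    have hu : u (a0 hm) = u a by move/ghzP: gu => h; apply/ffunP => j; apply: h.
    have hv : v (a0 hm) = v a by move/ghzP: gv => h; apply/ffunP => j; apply: h.
    by rewrite hu hv /u /v !setpartyE eqxx.
  rewrite mulr1n.
  have -> : Num.conj (((Num.sqrt (2:R))^-1 ^+ p)%:C) =
    ((Num.sqrt (2:R))^-1 ^+ p)%:C by exact: conjc_real.
  by rewrite -rmorphM /= amp_sq.
- have -> : u == v = false by apply: contraNF gv => /eqP <-.
  by rewrite mulr0n conjC0 mulr0.
- by rewrite mul0r mul0rn.
- by rewrite mul0r mul0rn.
Qed.

Lemma rho0_sq : rho0 *m rho0 = cC *: rho0.
Proof.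
rewrite /rho0 mulmx_diag; apply/matrixP => i j; rewrite !mxE.
by case: (i == j); case: ifP => _; rewrite ?mulr0 ?mulr1n ?mulr0n.
Qed.

Lemma spec_rho0 k : spectral_diag rho0 0 k = 0 \/ spectral_diag rho0 0 k = cC.
Proof.
have [[Hr _ _] _] := Gamma_rho0.
set U := spectralmx rho0.
have UtU : map_mx Num.conj U^T *m U = 1%:M.
  by rewrite -invmx_unitary ?spectral_unitarymx // mulVmx ?spectral_unit.
have DD : diag_mx (spectral_diag rho0) *m diag_mx (spectral_diag rho0) =
    cC *: diag_mx (spectral_diag rho0).
  rewrite (herm_spec Hr) -/U; move: UtU; set Ut := map_mx _ _ => UtU.
  rewrite !mulmxA -(mulmxA (U *m rho0) Ut U) UtU mulmx1.
  by rewrite -(mulmxA U rho0 rho0) rho0_sq -scalemxAr -scalemxAl.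
have := congr1 (fun M : 'M[C]_n => M k k) DD.
rewrite /= mulmx_diag !mxE eqxx !mulr1n => /eqP.
rewrite -subr_eq0 -mulrBl mulf_eq0 subr_eq0 => /orP [/eqP ->|/eqP ->]; by [right|left].
Qed.

Lemma ent_rho0 : vn_entropy rho0 = p%:R.
Proof.
have [[Hr _ Tr] _] := Gamma_rho0.
have ln2 : 0 < ln (2 : R) by apply: ln_gt0; rewrite ltr1n.
rewrite /vn_entropy.
rewrite (eq_bigr (fun k => complex.Re (spectral_diag rho0 0 k) * (ln cR / ln 2))); last first.
  move=> k _; case: (spec_rho0 k) => ->.
    by rewrite /xlog2 /= eqxx mul0r.
  by rewrite /xlog2 /cC /= gt_eqF ?cR_gt0 // -mulrA.
rewrite -mulr_suml -(big_morph _ (@ReD R) (erefl (complex.Re (0 : C)))).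
rewrite spec_sum // Tr /= mul1r.
rewrite /cR lnV ?posrE ?ltr0n ?expn_gt0 // natrX lnXn ?ltr0n //.
have -> : ln (2:R) *- p = - (p%:R * ln (2:R)) by rewrite mulr_natl.
set L := ln (2:R) in ln2 *; field.
by rewrite gt_eqF.
Qed.

End E.


Theorem mainTheorem9 (R : realType) (m p : nat) (hm : (3 <= m)%N) :
  (exists rho : 'M[R[i]]_(qdim m p), Gamma rho /\ vn_entropy rho = p%:R) /\
  (forall rho : 'M[R[i]]_(qdim m p), Gamma rho -> vn_entropy rho <= p%:R).
Proof.
split.
  by exists (rho0 R m p); split; [exact: Gamma_rho0 | exact: ent_rho0].
by move=> rho; apply: upper.
Qed.
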